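(* Consider the networked SIR epidemic-opinion model described in the context, under the standing assumption stated there. Every equilibrium $(s_e,x_e,o_e)\in[0,1]^{3n}$ of the model has the form $(s_e,\mathbf 0,(\bar L+I_n)^{-1}(\mathbf 1_n-s_e))$ with $s_e\in[0,1]^n$; conversely, for every $s_e\in[0,1]^n$ the point $(s_e,\mathbf 0,(\bar L+I_n)^{-1}(\mathbf 1_n-s_e))$ is an equilibrium, and $[(\bar L+I_n)^{-1}(\mathbf 1_n-s_e)]_i\in[0,1]$ for all $i\in[n]$.
   Context: There are $n$ communities. For $t\ge0$ and $i\in[n]$, $s_i(t),x_i(t),o_i(t)\in[0,1]$ denote the susceptible proportion, infected proportion and opinion of community $i$. The disease transmission network is a directed graph $\mathcal G=(\mathcal V,\mathcal E)$ on $n$ nodes with edge weights $\beta_{ij}>0$ if $(v_j,v_i)\in\mathcal E$ (and $\beta_{ij}=0$ otherwise); $\mathcal N_i=\{v_j:(v_j,v_i)\in\mathcal E\}$. The opinion network is a directed graph $\bar{\mathcal G}$ on the same nodes with nonnegative weights $\bar a_{ij}$ and Laplacian $\bar L=\mathrm{diag}(k_1,\dots,k_n)-\bar A$, where $[\bar A]_{ij}=\bar a_{ij}$ and $k_i=\sum_j \bar a_{ij}$. Parameters: $\beta_{\min}>0$, $\gamma_{\min}>0$, recovery rates $\gamma_i$. The model is $\dot s_i=-s_i\sum_{j\in\mathcal N_i}\big(\beta_{ij}-(\beta_{ij}-\beta_{\min})o_i\big)x_j$, $\dot x_i=s_i\sum_{j\in\mathcal N_i}\big(\beta_{ij}-(\beta_{ij}-\beta_{\min})o_i\big)x_j-\big(\gamma_{\min}+(\gamma_i-\gamma_{\min})o_i\big)x_i$,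 $\dot o=(\mathbf 1_n-s)-(\bar L+I_n)o$. Standing assumption: $\gamma_i\ge\gamma_{\min}>0$, $\beta_{ij}\ge\beta_{\min}>0$ for all $j\in\mathcal N_i$, and both $\mathcal G$ and $\bar{\mathcal G}$ are strongly connected. *)

(* Defs.v *)
From mathcomp Require Import all_boot all_order all_algebra.
From mathcomp Require Import reals.
Set Implicit Arguments. Unset Strict Implicit. Unset Printing Implicit Defensive.
Import Order.TTheory GRing.Theory Num.Theory.
Local Open Scope ring_scope.

Section Model.
Variable R : realType.
Variable n : nat.

(* E i j : the disease network has the edge (v_j, v_i), i.e. v_j \in N_i *)
Definition laplacian (abar : 'M[R]_n) : 'M[R]_n :=
  diag_mx (\row_i (\sum_j abar i j)) - abar.

Definition strongly_connected (edge : rel 'I_n) : Prop :=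
  forall u v : 'I_n, connect edge u v.

Definition infection (E : rel 'I_n) (beta : 'M[R]_n) (bmin : R)
    (o x : 'cV[R]_n) (i : 'I_n) : R :=
  \sum_(j | E i j) (beta i j - (beta i j - bmin) * o i 0) * x j 0.

Definition s_dot E beta bmin (s x o : 'cV[R]_n) (i : 'I_n) : R :=
  - (s i 0 * infection E beta bmin o x i).

Definition x_dot E beta bmin (gamma : 'I_n -> R) (gmin : R)
    (s x o : 'cV[R]_n) (i : 'I_n) : R :=
  s i 0 * infection E beta bmin o x i - (gmin + (gamma i - gmin) * o i 0) * x i 0.

Definition o_dot (abar : 'M[R]_n) (s o : 'cV[R]_n) : 'cV[R]_n :=
  (const_mx 1 - s) - (laplacian abar + 1%:M) *m o.

Definition equilibrium E beta bmin gamma gmin abar (s x o : 'cV[R]_n) : Prop :=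
  (forall i, s_dot E beta bmin s x o i = 0) /\
  (forall i, x_dot E beta bmin gamma gmin s x o i = 0) /\
  o_dot abar s o = 0.

Definition in01 (v : 'cV[R]_n) : Prop := forall i, 0 <= v i 0 <= 1.

End Model.

(* Main.v *)
Require Import Defs.
From mathcomp Require Import all_boot all_order all_algebra.
From mathcomp Require Import reals.
Import Order.TTheory GRing.Theory Num.Theory.
Local Open Scope ring_scope.

Lemma Mv_entry (R : realType) (n : nat) (abar : 'M[R]_n) (v : 'cV[R]_n) i :
  ((laplacian abar + 1%:M) *m v) i 0 = v i 0 + \sum_j abar i j * (v i 0 - v j 0).
Proof.
rewrite /laplacian mulmxDl mulmxBl mul1mx mul_diag_mx !mxE.
under [in RHS]eq_bigr do rewrite mulrBr.
by rewrite sumrB -mulr_suml addrC.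
Qed.

Lemma key_le (R : realType) (n : nat) (abar : 'M[R]_n) (v : 'cV[R]_n) (c : R) :
  (forall i j, 0 <= abar i j) ->
  (forall i, ((laplacian abar + 1%:M) *m v) i 0 <= c) -> forall i, v i 0 <= c.
Proof.
move=> ha hc i.
case: (@arg_maxP _ _ _ i xpredT (fun j => v j 0) isT) => k _ hk.
apply: le_trans (hk i isT) _.
apply: le_trans (hc k); rewrite Mv_entry lerDl.
apply: sumr_ge0 => j _; apply: mulr_ge0 => //; rewrite subr_ge0; exact: hk.
Qed.

Lemma key_ge (R : realType) (n : nat) (abar : 'M[R]_n) (v : 'cV[R]_n) (c : R) :
  (forall i j, 0 <= abar i j) ->
  (forall i, c <= ((laplacian abar + 1%:M) *m v) i 0) -> forall i, c <= v i 0.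
Proof.
move=> ha hc i.
have := @key_le R n abar (- v) (- c) ha.
rewrite mulmxN => h; have := h _ i; rewrite !mxE lerN2; apply => j.
by rewrite mxE lerN2.
Qed.

Lemma M_unit (R : realType) (n : nat) (abar : 'M[R]_n) :
  (forall i j, 0 <= abar i j) -> (laplacian abar + 1%:M) \in unitmx.
Proof.
move=> ha; set M := laplacian abar + 1%:M.
rewrite -unitmx_tr -row_free_unit -kermx_eq0; apply/eqP/row_matrixP => i.
set u := row i (kermx M^T).
have hu : M *m u^T = 0.
  by rewrite -[M]trmxK -trmx_mul -row_mul mulmx_ker row0 trmx0.
rewrite row0; apply/rowP => j; rewrite mxE.
have h1 := @key_le R n abar u^T 0 ha.
have h2 := @key_ge R n abar u^T 0 ha.
rewrite -/M hu in h1 h2.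
have a : u^T j 0 <= 0 by apply: h1 => k; rewrite mxE.
have b : 0 <= u^T j 0 by apply: h2 => k; rewrite mxE.
move: a b; rewrite !mxE => a b. by apply: le_anti; rewrite a b.
Qed.

Theorem lemma3 (R : realType) (n : nat)
  (E : rel 'I_n) (beta : 'M[R]_n) (bmin : R)
  (gamma : 'I_n -> R) (gmin : R) (abar : 'M[R]_n)
  (hbmin : 0 < bmin) (hgmin : 0 < gmin)
  (hgamma : forall i, gmin <= gamma i)
  (hbetaE : forall i j, E i j -> bmin <= beta i j)
  (hbeta0 : forall i j, ~~ E i j -> beta i j = 0)
  (habar : forall i j, 0 <= abar i j)
  (hGsc : strongly_connected (fun u v : 'I_n => E v u))
  (hGbsc : strongly_connected (fun u v : 'I_n => abar v u != 0)) :
  let M := laplacian abar + 1%:M in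
  M \in unitmx /\
  (forall s x o : 'cV[R]_n, in01 s -> in01 x -> in01 o ->
     equilibrium E beta bmin gamma gmin abar s x o ->
     x = 0 /\ o = invmx M *m (const_mx 1 - s)) /\
  (forall s : 'cV[R]_n, in01 s ->
     equilibrium E beta bmin gamma gmin abar s 0 (invmx M *m (const_mx 1 - s))) /\
  (forall s : 'cV[R]_n, in01 s -> in01 (invmx M *m (const_mx 1 - s))).
Proof.
move=> M.
have hM : M \in unitmx by exact: M_unit.
split => //; split; [|split].
- move=> s x o hs hx ho [hsd [hxd hod]].
  have hx0 : x = 0.
    apply/matrixP => i j; rewrite (ord1 j) mxE.
    have := hxd i; have := hsd i.
    rewrite /s_dot /x_dot => /eqP; rewrite oppr_eq0 => /eqP ->; rewrite sub0r.
    move/eqP; rewrite oppr_eq0 mulf_eq0 => /orP [|/eqP //].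
    have := ho i => /andP [o0 _].
    have : 0 < gmin + (gamma i - gmin) * o i 0.
      apply: lt_le_trans (hgmin) _; rewrite lerDl mulr_ge0 // subr_ge0; exact: hgamma.
    by move=> /gt_eqF ->.
  split => //.
  move: hod; rewrite /o_dot => /eqP; rewrite subr_eq0 => /eqP ->.
  by rewrite mulKmx.
- move=> s hs; split; [|split].
  + move=> i; rewrite /s_dot /infection big1 => [|j _]; [by rewrite mulr0 oppr0 | by rewrite [X in _ * X]mxE mulr0].
  + move=> i; rewrite /x_dot /infection big1 => [|j _]; [by rewrite mulr0 [X in _ * X]mxE mulr0 subr0 | by rewrite [X in _ * X]mxE mulr0].
  + by rewrite /o_dot mulKVmx // subrr.
- move=> s hs i; rewrite -/M.
  have e : M *m (invmx M *m (const_mx 1 - s)) = const_mx 1 - s by rewrite mulKVmx.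
  apply/andP; split.
  + apply: (@key_ge R n abar _ 0 habar) => k; rewrite -/M e !mxE subr_ge0.
    by have /andP [] := hs k.
  + apply: (@key_le R n abar _ 1 habar) => k; rewrite -/M e !mxE lerBlDr lerDl.
    by have /andP [] := hs k.
Qed.
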